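(* The Hilbert spaces $H_N^{\mathrm{sip}}=L^2(\frac1N\mathbb Z,\nu_{\gamma,N})$ converge to $H^{\mathrm{sbm}}=L^2(\mathbb R,\bar\nu)$ in the following sense: with the dense subset $C=\{f+\lambda\mathbf 1_{\{0\}}:f\in C_c^\infty(\mathbb R),\lambda\in\mathbb R\}\subset H^{\mathrm{sbm}}$ and the linear maps $\Phi_N:C\to H_N^{\mathrm{sip}}$, $\Phi_Nf=f|_{\frac1N\mathbb Z}$, one has $\lim_{N\to\infty}\|\Phi_Nf\|_{H_N^{\mathrm{sip}}}=\|f\|_{H^{\mathrm{sbm}}}$ for all $f\in C$.
   Context: $\gamma>0$; $\mu_N$ gives mass $\frac1N$ to each point of $\frac1N\mathbb Z$; $\nu_{\gamma,N}=\mu_N+\sqrt2\gamma\delta_0$; $\bar\nu=dx+\sqrt2\gamma\delta_0$ on $\mathbb R$. *)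

(* Defs.v *)
From HB Require Import structures.
From mathcomp Require Import all_boot all_order all_algebra.
From mathcomp Require Import all_classical all_reals all_analysis.
Set Implicit Arguments. Unset Strict Implicit. Unset Printing Implicit Defensive.
Import Order.TTheory GRing.Theory Num.Theory.
Import numFieldNormedType.Exports.
Local Open Scope classical_set_scope.
Local Open Scope ring_scope.

Definition smooth (R : realType) (f : R -> R) : Prop :=
  forall (n : nat) (x : R), derivable (derive1n n f) x 1.

Definition compact_support (R : realType) (f : R -> R) : Prop :=
  exists M : R, forall x : R, M < `|x| -> f x = 0.

Definition in_C (R : realType) (f : R -> R) : Prop :=
  exists (g : R -> R) (lam : R),
    smooth g /\ compact_support g /\ f = (fun x => g x + lam * \1_[set 0] x).

(* Squared norm in H_N^sip = L^2((1/N)Z, mu_N + sqrt2 gamma delta_0) of Phi_N f = f|_{(1/N)Z}: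
   sum_{k in Z} (1/N) f(k/N)^2 + sqrt2 gamma f(0)^2  (as an extended real). *)
Definition sq_norm_sip (R : realType) (gamma : R) (N : nat) (f : R -> R) : \bar R :=
  ((\esum_(k in [set: int]) ((N%:R)^-1 * (f (k%:~R / N%:R)) ^+ 2)%:E)
   + (Num.sqrt 2 * gamma * (f 0) ^+ 2)%:E)%E.

Definition norm_sip (R : realType) (gamma : R) (N : nat) (f : R -> R) : R :=
  Num.sqrt (fine (sq_norm_sip gamma N f)).

(* Squared norm in H^sbm = L^2(R, dx + sqrt2 gamma delta_0):
   int_R f^2 dx + sqrt2 gamma f(0)^2 *)
Definition sq_norm_sbm (R : realType) (gamma : R) (f : R -> R) : \bar R :=
  ((\int[@lebesgue_measure R]_(x in [set: R]) ((f x) ^+ 2)%:E)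
   + (Num.sqrt 2 * gamma * (f 0) ^+ 2)%:E)%E.

Definition norm_sbm (R : realType) (gamma : R) (f : R -> R) : R :=
  Num.sqrt (fine (sq_norm_sbm gamma f)).

(* Main.v *)
Require Import Defs.
From HB Require Import structures.
From mathcomp Require Import all_boot all_order all_algebra.
From mathcomp Require Import all_classical all_reals all_analysis.
From mathcomp Require Import ring lra zify unstable.
Import Order.TTheory GRing.Theory Num.Theory.
Import numFieldNormedType.Exports.
Local Open Scope classical_set_scope.
Local Open Scope ring_scope.
Definition xg (R : realType) (L N i : nat) : R := i%:R / N%:R - L%:R.
Section Deriv.
Context (R : realType).

Lemma derivable_cont (f : R -> R) x : derivable f x 1 -> {for x, continuous f}.
Proof. by move=> /derivable1_diffP /differentiable_continuous. Qed.

Context (g : R -> R) (gs : smooth g).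

Lemma g_der (x : R) : is_derive x 1 g ((derive1 g) x).
Proof. have := derivableP (gs 0 x); by rewrite /= -derive1E. Qed.

Lemma g_cont : continuous g.
Proof. move=> x; exact: derivable_cont (gs 0 x). Qed.

Lemma g'_cont : continuous (derive1 g).
Proof. move=> x; exact: derivable_cont (gs 1 x). Qed.

Lemma h_der (x : R) : is_derive x 1 (fun y => g y ^+ 2) (2 * g x * (derive1 g) x).
Proof.
have := is_deriveX 2 (g_der x).
have -> : (g ^+ 2) = (fun y => g y ^+ 2) by apply/funext => y; rewrite /= expr2.
by rewrite /= expr1 /GRing.scale /=.
Qed.

Lemma h_cont : continuous (fun y => g y ^+ 2).
Proof. move=> x; apply: (@derivable_cont (fun y => g y ^+ 2)). by case: (h_der x). Qed.

Lemma h'_cont : continuous (fun x => 2 * g x * (derive1 g) x).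
Proof.
move=> x; apply: (continuousM (s := fun x => 2 * g x)); last exact: g'_cont.
apply: (continuousM (s := fun _ => 2)); [exact: cvg_cst | exact: g_cont].
Qed.
End Deriv.
Section Riemann.
Context (R : realType) (h h' : R -> R).
Hypothesis hd : forall x : R, is_derive x 1 h (h' x).
Hypothesis hc : continuous h.
Hypothesis h'c : continuous h'.
Context (L : nat).
Hypothesis hz : forall x : R, L%:R <= `|x| -> h x = 0.

Local Notation mu := (@lebesgue_measure R).
Let a : R := - L%:R - 1.
Let G (x : R) : R := Rintegral mu `[a, x] h.

Lemma h_int (b c : R) : mu.-integrable `[b, c] (EFin \o h).
Proof.
apply: continuous_compact_integrable; first exact: segment_compact.
exact: continuous_subspaceT.
Qed.

Lemma G_isder (x : R) : a < x -> x < L%:R + 1 -> is_derive x 1 G (h x).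
Proof.
move=> ax xu.
have [dG G'] := @continuous_FTC1_closed R h a x (L%:R + 1) xu (h_int _ _) ax (hc x).
apply: DeriveDef => //.
by rewrite -derive1E.
Qed.

Lemma G_mL : G (- L%:R) = 0.
Proof.
rewrite /G /Rintegral integral0_eq //= => x; rewrite in_itv /= => /andP[_ xl].
rewrite hz //; rewrite ler0_norm; first by rewrite lerNr.
apply: (le_trans xl); rewrite oppr_le0; exact: ler0n.
Qed.

Lemma G_L : (\int[mu]_(x in [set: R]) (h x)%:E)%E = (G L%:R)%:E.
Proof.
rewrite /G /Rintegral fineK; last exact: integrable_fin_num (h_int _ _).
rewrite [in RHS]integral_mkcond; apply: eq_integral => x _.
rewrite patchE; case: ifPn => // /negP; rewrite inE /= in_itv /= => /negP.
rewrite negb_and -!ltNge => /orP[xa|xL]; rewrite hz //.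
  rewrite ler0_norm; first by rewrite /a in xa; lra.
  rewrite /a in xa; have := ler0n R L; lra.
by rewrite ger0_norm ?ltW //; apply: le_lt_trans xL; exact: ler0n.
Qed.
End Riemann.
Section Riemann2.
Context (R : realType) (h h' : R -> R).
Hypothesis hd : forall x : R, is_derive x 1 h (h' x).
Hypothesis hc : continuous h.
Hypothesis h'c : continuous h'.
Context (L : nat).
Hypothesis hz : forall x : R, L%:R <= `|x| -> h x = 0.

Local Notation mu := (@lebesgue_measure R).
Let a : R := - L%:R - 1.
Let G (x : R) : R := Rintegral mu `[a, x] h.

Lemma K_ex : exists K : R, 0 <= K /\ forall x, - L%:R <= x <= L%:R -> `|h' x| <= K.
Proof.
have Lge0 := ler0n R L.
have cn : continuous (fun x => `|h' x|).
  by move=> x; apply: continuous_comp; [exact: h'c | exact: norm_continuous].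
have ab : - L%:R <= L%:R :> R by lra.
have [c _ Hc] := EVT_max ab (continuous_subspaceT cn).
exists `|h' c|; split => // x xL; apply: Hc; by rewrite in_itv.
Qed.

Lemma step (K : R) (hK : forall x, - L%:R <= x <= L%:R -> `|h' x| <= K) (y z : R) :
  - L%:R <= y -> y <= z -> z <= L%:R ->
  `|G z - G y - (z - y) * h y| <= K * (z - y) ^+ 2.
Proof.
move=> Ly yz zL.
have Lge0 := ler0n R L.
case: (ltrP y z) => [{}yz|zy]; last first.
  have -> : z = y by apply/eqP; rewrite eq_le zy yz.
  by rewrite !subrr mul0r subr0 normr0 expr0n mulr0.
have dG x : y <= x <= z -> is_derive x 1 G (h x).
  move=> /andP[yx xz]; apply: G_isder => //; rewrite /a; lra.
have dG1 : forall x, x \in `]y, z[ -> is_derive x 1 G (h x).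
  move=> x; rewrite in_itv /= => /andP[? ?]; apply: dG; apply/andP; split; exact: ltW.
have cG : {within `[y, z], continuous G}.
  apply: derivable_within_continuous => x; rewrite in_itv /= => ?.
  by case: (dG x ltac:(assumption)).
have [c cyz Gc] := MVT yz dG1 cG.
move: cyz; rewrite in_itv /= => /andP[yc cz].
have dh1 : forall x, x \in `]y, c[ -> is_derive x 1 h (h' x) by move=> *; exact: hd.
have [d dyc hdc] := MVT_segment (ltW yc) dh1 (continuous_subspaceT hc).
move: dyc; rewrite in_itv /= => /andP[yd dc].
have Kd : `|h' d| <= K by apply: hK; apply/andP; split; lra.
have -> : G z - G y - (z - y) * h y = h' d * (c - y) * (z - y).
  by rewrite Gc -hdc; ring.
have ? : 0 <= `|h' d| by [].
have ? : 0 <= c - y by lra.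
have ? : 0 <= z - y by lra.
have ? : 0 <= K by apply: le_trans Kd.
rewrite !normrM (ger0_norm (x := c - y)) // (ger0_norm (x := z - y)) // expr2 mulrA.
apply: ler_pM => //; first exact: mulr_ge0.
apply: ler_pM => //; lra.
Qed.
End Riemann2.
Section Riemann3.
Context (R : realType) (h h' : R -> R).
Hypothesis hd : forall x : R, is_derive x 1 h (h' x).
Hypothesis hc : continuous h.
Hypothesis h'c : continuous h'.
Context (L : nat).
Hypothesis hz : forall x : R, L%:R <= `|x| -> h x = 0.

Local Notation mu := (@lebesgue_measure R).
Let a : R := - L%:R - 1.
Let G (x : R) : R := Rintegral mu `[a, x] h.

Lemma riemann_bound (K : R) (hK : forall x, - L%:R <= x <= L%:R -> `|h' x| <= K)
  (N : nat) : (0 < N)%N ->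
  `|G L%:R - \sum_(i < (2 * L * N)%N) N%:R^-1 * h (xg R L N i)| <= 2 * L%:R * K / N%:R.
Proof.
move=> N0.
have Np : 0 < N%:R :> R by rewrite ltr0n.
have Lge0 := ler0n R L.
have xS i : xg R L N i.+1 - xg R L N i = N%:R^-1.
  by rewrite /xg -natr1 mulrDl; field; rewrite gt_eqF.
have x0 : xg R L N 0 = - L%:R by rewrite /xg mul0r sub0r.
have xe : xg R L N (2 * L * N)%N = L%:R.
  rewrite /xg natrM mulfK ?gt_eqF // natrM; lra.
have xlo i : - L%:R <= xg R L N i.
  rewrite /xg; have : 0 <= i%:R / N%:R :> R by apply: divr_ge0.
  lra.
have xhi i : (i.+1 <= 2 * L * N)%N -> xg R L N i.+1 <= L%:R.
  move=> iN; rewrite /xg.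
  have : i.+1%:R / N%:R <= 2 * L%:R :> R.
    rewrite ler_pdivrMr //.
    have : (i.+1%:R <= (2 * L * N)%:R :> R) by rewrite ler_nat.
    by rewrite !natrM.
  lra.
have tel : G L%:R = \sum_(i < (2 * L * N)%N) (G (xg R L N i.+1) - G (xg R L N i)).
  rewrite -(big_mkord xpredT (fun i => G (xg R L N i.+1) - G (xg R L N i))).
  rewrite (telescope_sumr (fun i => G (xg R L N i))) // xe x0.
  have GmL : G (- L%:R) = 0 := @G_mL R h L hz.
  by rewrite GmL subr0.
rewrite tel -sumrB.
apply: (le_trans (ler_norm_sum _ _ _)).
apply: (@le_trans _ _ (\sum_(i < (2 * L * N)%N) K * N%:R^-1 ^+ 2)).
  apply: ler_sum => i _.
  have := @step R h h' hd hc L K hK (xg R L N i) (xg R L N i.+1) (xlo i).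
  rewrite xS; apply.
  - by rewrite -subr_ge0 xS invr_ge0 ltW.
  - exact: xhi.
rewrite sumr_const card_ord.
rewrite -[X in X <= _]mulr_natr (natrM _ (2 * L) N) (natrM _ 2 L); rewrite le_eqVlt; apply/orP; left; apply/eqP; field. all: by rewrite gt_eqF.
Qed.
Lemma riemann_cvg :
  (fun N : nat => \sum_(i < (2 * L * N)%N) N%:R^-1 * h (xg R L N i)) @ \oo --> G L%:R.
Proof.
have [K [K0 hK]] := @K_ex R h' h'c L.
apply/cvgrPdist_le => e e0.
near=> N.
have N0 : (0 < N)%N by near: N; exact: nbhs_infty_gt.
have NK : 2 * L%:R * K / e <= N%:R by near: N; exact: nbhs_infty_ger.
apply: (le_trans (riemann_bound K hK N N0)).
have Np : 0 < N%:R :> R by rewrite ltr0n.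
rewrite ler_pdivrMr //; rewrite ler_pdivrMr // in NK; by rewrite [e * _]mulrC.
Unshelve. all: by end_near.
Qed.
End Riemann3.
Section Grid.
Context (R : realType) (F : R -> R) (L N : nat).
Hypothesis N0 : (0 < N)%N.
Hypothesis Fz : forall x : R, L%:R <= `|x| -> F x = 0.

Lemma esum_grid :
  (\esum_(k in [set: int]) ((N%:R)^-1 * (F (k%:~R / N%:R)) ^+ 2)%:E)%E =
  (\sum_(i < (2 * L * N)%N) N%:R^-1 * F (xg R L N i) ^+ 2)%:E.
Proof.
have Np : 0 < N%:R :> R by rewrite ltr0n.
set a := fun k : int => ((N%:R)^-1 * (F (k%:~R / N%:R)) ^+ 2)%:E.
pose psi := fun i : nat => (i%:Z - (L * N)%:Z)%R.
pose S := psi @` `I_(2 * L * N).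
have aS : forall k, ~ S k -> a k = 0%E.
  move=> k nk; rewrite /a.
  have [hk|hk] := lerP (L%:R : R) `|(k%:~R : R) / N%:R|; first by rewrite Fz // expr0n mulr0.
  exfalso; apply: nk.
  rewrite normrM normfV (ger0_norm (ltW Np)) ltr_pdivrMr // -natrM -intr_norm in hk.
  have hk' : (`|k| < (L * N)%:Z)%R by rewrite -(ltr_int R).
  exists (absz (k + (L * N)%:Z)%R); rewrite /psi /=; [rewrite /= | ]; lia.
have -> : (\esum_(k in [set: int]) a k = \esum_(k in S) a k)%E.
  rewrite [RHS]esum_mkcond; apply: eq_esum => k _.
  case: ifPn => // /negP; rewrite inE => nk; exact: aS.
rewrite esum_fset; last 2 first.
- exact/finite_image/finite_II.
- by move=> i _; rewrite /a lee_fin; apply: mulr_ge0; [rewrite invr_ge0 ltW | exact: sqr_ge0].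
rewrite fsbig_image; last by move=> i j _ _; rewrite /psi => /eqP; rewrite subr_eq addrNK => /eqP [].
rewrite -fsbig_ord sumEFin; congr EFin; apply: eq_bigr => i _.
congr (_ * F _ ^+ 2).
rewrite /psi /xg intrD intrN -!pmulrn natrM mulrDl mulNr mulfK // ?gt_eqF //.
Qed.
End Grid.
Lemma inv_nat_cvg0 (R : realType) : (fun N : nat => (N%:R : R)^-1) @ \oo --> (0 : R).
Proof.
apply/cvgrPdist_le => e e0; near=> N.
have N0 : (0 < N)%N by near: N; exact: nbhs_infty_gt.
have NK : e^-1 <= N%:R by near: N; exact: nbhs_infty_ger.
have Np : 0 < N%:R :> R by rewrite ltr0n.
rewrite sub0r normrN ger0_norm; last by rewrite invr_ge0 ltW.
by rewrite invf_ple ?posrE.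
Unshelve. all: by end_near.
Qed.

Theorem proposition5p5 (R : realType) (gamma : R) (hgamma : 0 < gamma)
  (f : R -> R) (hf : in_C f) :
  (fun N : nat => norm_sip gamma N f) @ \oo --> norm_sbm gamma f.
Proof.
case: hf => g [lam [gs [[M gM] fE]]].
pose L := (Num.bound M).+1.
have ML : M < L%:R.
  apply: (lt_le_trans (ltr_bound M)); rewrite ler_nat; exact: leqnSn.
have L0 : 0 < L%:R :> R by rewrite ltr0n.
pose h := fun x => g x ^+ 2.
pose h' := fun x => 2 * g x * derive1 g x.
have hz : forall x : R, L%:R <= `|x| -> h x = 0.
  by move=> x Lx; rewrite /h gM ?expr0n //; apply: lt_le_trans Lx.
have fg : forall x : R, x != 0 -> f x = g x.
  by move=> x x0; rewrite fE /= indicE memNset ?mulr0 ?addr0 //= => /eqP; apply/negP.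
have fz : forall x : R, L%:R <= `|x| -> f x = 0.
  move=> x Lx; rewrite fg; first by rewrite gM //; apply: lt_le_trans Lx.
  by apply/eqP => x0; move: Lx; rewrite x0 normr0; rewrite leNgt L0.
pose I := Rintegral (@lebesgue_measure R) `[- L%:R - 1, L%:R] h.
have Rc : (fun N : nat => \sum_(i < (2 * L * N)%N) N%:R^-1 * h (xg R L N i)) @ \oo --> I
  := @riemann_cvg R h h' (@h_der R g gs) (@h_cont R g gs) (@h'_cont R g gs) L hz.
have GL : (\int[lebesgue_measure]_(x in [set: R]) (h x)%:E)%E = I%:E
  := @G_L R h (@h_cont R g gs) L hz.
set c := Num.sqrt 2 * gamma * f 0 ^+ 2.
set d := f 0 ^+ 2 - g 0 ^+ 2.
have sbmE : norm_sbm gamma f = Num.sqrt (I + c).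
  rewrite /norm_sbm /sq_norm_sbm -/c.
  have -> : (\int[lebesgue_measure]_(x in [set: R]) (f x ^+ 2)%:E)%E = I%:E.
    rewrite -GL.
    have m0 : measurable ([set: R] `\ 0) by apply: measurableD => //; exact: measurable_set1.
    have mh : measurable_fun ([set: R] `\ 0) h.
      apply: measurable_funS (measurable_realfun.continuous_measurable_fun (@h_cont R g gs)) => //.
    transitivity (\int[lebesgue_measure]_(x in [set: R] `\ 0%R) (h x)%:E)%E; last first.
      rewrite integral_setD1 //; exact/measurable_realfun.measurable_EFinP.
    rewrite -(@integral_setD1 _ _ 0%R) //; last first.
      apply/measurable_realfun.measurable_EFinP; apply: eq_measurable_fun mh => x; rewrite inE /= => -[_ /eqP x0].
      by rewrite /= /h fg.
    apply: eq_integral => x; rewrite inE /= => -[_ /eqP x0].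
    by rewrite /h fg.
  by rewrite -EFinD.
pose S := fun N : nat => \sum_(i < (2 * L * N)%N) N%:R^-1 * h (xg R L N i).
have sipE : forall N : nat, (0 < N)%N ->
    norm_sip gamma N f = Num.sqrt (S N + N%:R^-1 * d + c).
  move=> N N0.
  have Np : 0 < N%:R :> R by rewrite ltr0n.
  rewrite /norm_sip /sq_norm_sip (@esum_grid R f L N N0 fz) -/c -EFinD /=.
  congr (Num.sqrt (_ + c)).
  have oN : (L * N < 2 * L * N)%N by rewrite -mulnA ltn_Pmull // muln_gt0 N0 andbT.
  pose o : 'I_(2 * L * N) := Ordinal oN.
  have xo : xg R L N o = 0 by rewrite /xg /= natrM mulfK ?gt_eqF // subrr.
  rewrite /S (bigD1 o) // [in RHS](bigD1 o) //= xo.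
  have -> : \sum_(i < (2 * L * N)%N | i != o) N%:R^-1 * f (xg R L N i) ^+ 2 =
            \sum_(i < (2 * L * N)%N | i != o) N%:R^-1 * h (xg R L N i).
    apply: eq_bigr => i io; rewrite fg // /xg; apply/eqP => /eqP.
    rewrite subr_eq0 => /eqP e.
    have : (i : nat)%:R = (L * N)%:R :> R by rewrite natrM -e divfK // gt_eqF.
    move/eqP; rewrite eqr_nat => /eqP ei.
    by move/negP: io; apply; apply/eqP/val_inj.
  rewrite /h /d; ring.
rewrite sbmE.
have E : \forall N \near \oo, Num.sqrt (S N + N%:R^-1 * d + c) = norm_sip gamma N f.
  near=> N; rewrite sipE //; near: N; exact: nbhs_infty_gt.
apply: cvg_trans (near_eq_cvg E) _.
have Sc : (fun N : nat => S N + N%:R^-1 * d + c) @ \oo --> I + 0 * d + c.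
  apply: cvgD; last exact: cvg_cst.
  apply: cvgD; first exact: Rc.
  apply: cvgM; [exact: inv_nat_cvg0 | exact: cvg_cst].
rewrite mul0r addr0 in Sc.
exact: (continuous_cvg _ (@sqrt_continuous R _) Sc).
Unshelve. all: by end_near.
Qed.
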